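(* For any choice function $\tau$ and any minimal choice of horizontal edges $\mathcal H=\mathcal H^{\min}$, the homomorphism $\varphi_{\tau,\mathcal H}: C(X,\mathbb{Z})\cong K_0(C(X))\to\mathbb{Z}$ is non-trivial. In particular, the $K$-homology class of a Pearson–Bellissard spectral triple is never trivial.
   Context: Let $(X,d)$ be an infinite compact ultrametric space, identified with the boundary $\partial\mathcal{T}$ (infinite paths from the root) of its Michon tree $\mathcal{T}=(\mathcal{T}^{(0)},\mathcal{T}^{(1)})$, whose level-$n$ vertices are the balls of the $n$-th radius in the image of $d$. For a vertex $v$ let $\mathcal{T}^{(0)}(v)$ be its set of immediate successors and $\chi_v$ the indicator function of the set of infinite paths through $v$. A minimal choice of horizontal edges $\mathcal H^{\min}$ consists, for each branching vertex $v$, of two distinct vertices of $\mathcal{T}^{(0)}(v)$ linked by two edges (one in each direction). A choice function $\tau:\mathcal{T}^{(0)}\to\partial\mathcal{T}$ satisfies: $\tau(v)$ passes through $v$, and if $w\prec v$ then $\tau(w)=\tau(v)$ iff $\tau(w)$ passes through $v$. Fix an orientation $\mathcal H=\mathcal H^+\cup\mathcal H^-$. The spectral triple on $\ell^2(\mathcal H)=\ell^2(\mathcal H^+)\oplus\ell^2(\mathcal H^-)$ with representation $\pi_\tau(f)\psi(h)=f(\tau(s(h)))\psi(h)$ and Dirac operator $D\psi(h)=\delta(h)^{-1}\psi(h^{\mathrm{op}})$ (this is the Pearson–Bellissard triple when $\mathcal H=\mathcal H^{\min}$) gives the even Fredholm module with $F=\mathrm{sign}(D)$, whose off-diagonal part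 $T:\ell^2(\mathcal H^+)\to\ell^2(\mathcal H^-)$ is $T1_h=1_{h^{\mathrm{op}}}$. Its Connes pairing with $K_0$ is $\varphi_{\tau,\mathcal H}(p)=\mathrm{Ind}(\pi_-(p)T\pi_+(p))$, explicitly $\varphi_{\tau,\mathcal H}(\chi_v)=\sum_{h\in\mathcal H^+}\big(\chi_v(\tau(s(h)))-\chi_v(\tau(r(h)))\big)$. *)

(* Defs.v *)
From Stdlib Require Import Reals ZArith List ClassicalEpsilon.
Set Implicit Arguments.
Open Scope R_scope.

Record ultrametric (X : Type) (d : X -> X -> R) : Prop := {
  um_nonneg : forall x y, 0 <= d x y;
  um_sep : forall x y, d x y = 0 <-> x = y;
  um_sym : forall x y, d x y = d y x;
  um_ineq : forall x y z, d x z <= Rmax (d x y) (d y z) }.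

Definition seq_compact (X : Type) (d : X -> X -> R) : Prop :=
  forall u : nat -> X, exists (x : X) (phi : nat -> nat),
    (forall n, (phi n < phi (S n))%nat) /\
    (forall eps, 0 < eps -> exists N, forall n, (N <= n)%nat -> d (u (phi n)) x < eps).

Definition infinite_type (X : Type) : Prop := ~ exists l : list X, forall x, In x l.

Definition radii_of (X : Type) (d : X -> X -> R) (r : nat -> R) : Prop :=
  (forall n, r (S n) < r n) /\
  (forall t, (exists x y, x <> y /\ d x y = t) <-> exists n, r n = t).

Definition cball (X : Type) (d : X -> X -> R) (x : X) (t : R) : X -> Prop :=
  fun y => d x y <= t.

(** Vertices of the Michon tree: (level n, closed ball of radius r n). *)
Definition vtx (X : Type) : Type := (nat * (X -> Prop))%type.

Definition is_vertex (X : Type) (d : X -> X -> R) (r : nat -> R) (v : vtx X) : Prop :=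
  exists x, snd v = cball d x (r (fst v)).

Definition is_child (X : Type) (d : X -> X -> R) (r : nat -> R) (v w : vtx X) : Prop :=
  is_vertex d r v /\ is_vertex d r w /\ fst w = S (fst v) /\
  (forall y, snd w y -> snd v y).

Definition branching (X : Type) (d : X -> X -> R) (r : nat -> R) (v : vtx X) : Prop :=
  is_vertex d r v /\ exists w1 w2, is_child d r v w1 /\ is_child d r v w2 /\ w1 <> w2.

Definition precedes (X : Type) (d : X -> X -> R) (r : nat -> R) (w v : vtx X) : Prop :=
  is_vertex d r w /\ is_vertex d r v /\ (fst w < fst v)%nat /\
  (forall y, snd v y -> snd w y).

(** The infinite path through the point x passes through v iff x lies in the ball v. *)
Definition passes (X : Type) (x : X) (v : vtx X) : Prop := snd v x.

Definition choice_function (X : Type) (d : X -> X -> R) (r : nat -> R)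
    (tau : vtx X -> X) : Prop :=
  (forall v, is_vertex d r v -> passes (tau v) v) /\
  (forall w v, precedes d r w v -> (tau w = tau v <-> passes (tau w) v)).

(** An oriented minimal choice of horizontal edges: for each branching v,
    hp v = (s(h), r(h)) for the edge h in H^+ between the two chosen
    distinct successors of v (its opposite edge lies in H^-). *)
Definition oriented_min_edges (X : Type) (d : X -> X -> R) (r : nat -> R)
    (hp : vtx X -> vtx X * vtx X) : Prop :=
  forall v, branching d r v ->
    is_child d r v (fst (hp v)) /\ is_child d r v (snd (hp v)) /\
    fst (hp v) <> snd (hp v).

Definition chi (X : Type) (v : vtx X) (x : X) : Z :=
  if excluded_middle_informative (snd v x) then 1%Z else 0%Z.

Definition fin_sum_eq (V : Type) (A : V -> Prop) (f : V -> Z) (s : Z) : Prop :=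
  exists l : list V, NoDup l /\ (forall v, In v l -> A v) /\
    (forall v, A v -> f v <> 0%Z -> In v l) /\
    fold_right (fun v acc => (f v + acc)%Z) 0%Z l = s.

(** phi_{tau,H}(chi_w) = sum_{h in H^+} (chi_w(tau(s h)) - chi_w(tau(r h))) = k *)
Definition phi_chi_eq (X : Type) (d : X -> X -> R) (r : nat -> R)
    (tau : vtx X -> X) (hp : vtx X -> vtx X * vtx X) (w : vtx X) (k : Z) : Prop :=
  fin_sum_eq (branching d r)
    (fun v => (chi w (tau (fst (hp v))) - chi w (tau (snd (hp v))))%Z) k.

(* Main.v *)
Require Import Defs.
From Stdlib Require Import Reals ZArith List Lra Lia.
From Stdlib Require Import Classical ClassicalEpsilon FunctionalExtensionality PropExtensionality.
Open Scope R_scope.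

Lemma um_move (X : Type) (d : X -> X -> R) (a b y : X) (t : R) :
  ultrametric d -> d a b <= t -> d a y <= t -> d b y <= t.
Proof.
  intros U H1 H2. eapply Rle_trans. apply (um_ineq U b a y).
  apply Rmax_lub; auto. rewrite (um_sym U); auto.
Qed.

Lemma um_mem (X : Type) (d : X -> X -> R) (z a b : X) (t : R) :
  ultrametric d -> d a b <= t -> d z a <= t -> d z b <= t.
Proof.
  intros U H1 H2. eapply Rle_trans. apply (um_ineq U z a b).
  apply Rmax_lub; auto.
Qed.

Lemma r_decr (r : nat -> R) : (forall n, r (S n) < r n) ->
  forall m n, (m <= n)%nat -> r n <= r m.
Proof.
  intros H m n Hmn. induction Hmn. lra. specialize (H m0). lra.
Qed.

Theorem mainTheorem3 (X : Type) (d : X -> X -> R) (r : nat -> R)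
    (tau : vtx X -> X) (hp : vtx X -> vtx X * vtx X) :
  ultrametric d -> seq_compact d -> infinite_type X -> radii_of d r ->
  choice_function d r tau -> oriented_min_edges d r hp ->
  exists w : vtx X, is_vertex d r w /\
    exists k : Z, k <> 0%Z /\ phi_chi_eq d r tau hp w k.
Proof.
  intros U _ _ [Rdec Rim] [Ctau _] Hhp.
  assert (Hdec := r_decr r Rdec).
  destruct (proj2 (Rim (r 0%nat)) (ex_intro _ 0%nat eq_refl)) as [a [b [Hab Hdab]]].
  assert (Hall : forall x y, d x y <= r 0%nat).
  { intros x y. destruct (classic (x = y)) as [->|Hne].
    - rewrite (proj2 (um_sep U y y) eq_refl). rewrite <- Hdab. apply (um_nonneg U).
    - destruct (proj1 (Rim (d x y)) (ex_intro _ x (ex_intro _ y (conj Hne eq_refl)))) as [n Hn].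
      rewrite <- Hn. apply Hdec. lia. }
  set (root := (0%nat, cball d a (r 0%nat)) : vtx X).
  assert (Hroot_v : is_vertex d r root) by (exists a; reflexivity).
  assert (Hlev0 : forall v, is_vertex d r v -> fst v = 0%nat -> v = root).
  { intros [n P] [x Hx] H0; simpl in *; subst. unfold root; f_equal.
    apply functional_extensionality; intro y. unfold cball.
    apply propositional_extensionality; split; intros _; apply Hall. }
  assert (Hbr : branching d r root).
  { split; auto. exists (1%nat, cball d a (r 1%nat)), (1%nat, cball d b (r 1%nat)).
    repeat split.
    - auto.
    - exists a; reflexivity.
    - intros y _. unfold root, cball; simpl. apply Hall.
    - auto.
    - exists b; reflexivity.
    - intros y _. unfold root, cball; simpl. apply Hall.
    - intro E. injection E as E. assert (Hb : cball d a (r 1%nat) b).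
      { rewrite E. unfold cball. rewrite (proj2 (um_sep U b b) eq_refl).
        destruct (proj2 (Rim (r 1%nat)) (ex_intro _ 1%nat eq_refl)) as [p [q [_ Hpq]]].
        rewrite <- Hpq. apply (um_nonneg U). }
      unfold cball in Hb. specialize (Rdec 0%nat). lra. }
  destruct (Hhp root Hbr) as [[_ [Hw1v [Hw1l _]]] [[_ [Hw2v [Hw2l _]]] Hne]].
  set (w1 := fst (hp root)) in *. set (w2 := snd (hp root)) in *.
  simpl in Hw1l, Hw2l.
  exists w1. split; auto. exists 1%Z. split; [lia|].
  exists (root :: nil). split; [constructor; [simpl; tauto|constructor]|].
  split; [intros v [<-|[]]; auto|].
  split.
  - intros v Hv Hnz. left. destruct v as [n P].
    destruct n as [|n]. { symmetry; apply Hlev0; auto; apply Hv. }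
    exfalso. apply Hnz.
    destruct (Hhp _ Hv) as [[_ [Hc1v [Hc1l Hc1s]]] [[_ [Hc2v [Hc2l Hc2s]]] _]].
    destruct Hv as [[x Hx] _]. simpl in Hx.
    set (c1 := fst (hp (S n, P))) in *. set (c2 := snd (hp (S n, P))) in *.
    assert (I1 : P (tau c1)) by (apply Hc1s; apply Ctau; auto).
    assert (I2 : P (tau c2)) by (apply Hc2s; apply Ctau; auto).
    rewrite Hx in I1, I2. unfold cball in I1, I2.
    assert (Hd : d (tau c1) (tau c2) <= r 1%nat).
    { eapply Rle_trans. apply (um_ineq U _ x _). apply Rmax_lub.
      rewrite (um_sym U); eapply Rle_trans; [apply I1|apply Hdec; lia].
      eapply Rle_trans; [apply I2|apply Hdec; lia]. }
    destruct Hw1v as [z Hz].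
    unfold chi. rewrite Hz, Hw1l.
    destruct (excluded_middle_informative _) as [h1|h1];
    destruct (excluded_middle_informative _) as [h2|h2]; try reflexivity; exfalso.
    + apply h2. unfold cball in *. eapply um_mem; eauto.
    + apply h1. unfold cball in *. eapply um_mem; eauto.
      rewrite (um_sym U); auto.
  - simpl. unfold chi.
    assert (T1 : snd w1 (tau w1)) by (apply Ctau; auto).
    assert (T2 : snd w2 (tau w2)) by (apply Ctau; auto).
    destruct (excluded_middle_informative _) as [h1|h1]; [|contradiction].
    destruct (excluded_middle_informative _) as [h2|h2]; [|reflexivity].
    exfalso. apply Hne.
    destruct Hw1v as [z1 Hz1]. destruct Hw2v as [z2 Hz2].
    change (snd w1 (tau w2)) in h2.
    revert h2 T2. generalize (tau w2). intros p h2 T2.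
    rewrite Hz1 in h2. rewrite Hz2 in T2. unfold cball in *.
    assert (Hzz : d z1 z2 <= r 1%nat).
    { eapply Rle_trans. apply (um_ineq U _ p _).
      rewrite Hw1l in h2. rewrite Hw2l in T2.
      apply Rmax_lub; auto. rewrite (um_sym U); auto. }
    destruct w1 as [n1 P1], w2 as [n2 P2]; simpl in *; subst.
    f_equal. apply functional_extensionality; intro y.
    apply propositional_extensionality; split; intro Hy.
    + eapply um_move; eauto.
    + eapply um_move; eauto. rewrite (um_sym U); auto.
Qed.
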